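(* Let $\epsilon>0$ and $\delta\in(0,1)$, and set $\delta'=\delta+e^{\epsilon}Q(\sqrt{2\epsilon})$; assume $\delta'<1$. For $x\in(0,1)$ let $\mathcal{R}_\epsilon(x)=\sqrt{(Q^{-1}(x))^2+2\epsilon}-Q^{-1}(x)$. Then the function $\mathcal{B}_{\epsilon,\delta}(\mu)=Q\!\left(\tfrac{\epsilon}{\mu}-\tfrac{\mu}{2}\right)-e^{\epsilon}Q\!\left(\tfrac{\epsilon}{\mu}+\tfrac{\mu}{2}\right)-\delta$ satisfies $\mathcal{B}_{\epsilon,\delta}(\mathcal{R}_\epsilon(\delta))\le 0\le \mathcal{B}_{\epsilon,\delta}(\mathcal{R}_\epsilon(\delta'))$; consequently, any $\mu_0>0$ with $\mathcal{B}_{\epsilon,\delta}(\mu_0)=0$ lies in the interval $[\mathcal{R}_\epsilon(\delta),\mathcal{R}_\epsilon(\delta')]$, and such a $\mu_0$ exists in this interval.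
   Context: $Q(\cdot)$ denotes the survival function of the standard normal distribution, $Q(x)=\mathbb{P}\{Z>x\}$, $Z\sim\mathcal{N}(0,1)$, and $Q^{-1}$ its inverse on $(0,1)$. *)

(* Defs.v *)
From Stdlib Require Import Reals Lra ClassicalEpsilon.
From Coquelicot Require Import Coquelicot.
Open Scope R_scope.

Definition Q (x : R) : R :=
  / sqrt (2 * PI) *
  RInt_gen (fun t => exp (- (t ^ 2) / 2)) (at_point x) (Rbar_locally p_infty).

(* Q^{-1}(y): the (unique, since Q is strictly decreasing) x with Q x = y;
   only meaningful for y in (0,1). *)
Definition Qinv (y : R) : R :=
  epsilon (inhabits 0) (fun x => Q x = y).

Definition Reps (eps x : R) : R :=
  sqrt ((Qinv x) ^ 2 + 2 * eps) - Qinv x.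

Definition Bed (eps delta mu : R) : R :=
  Q (eps / mu - mu / 2) - exp eps * Q (eps / mu + mu / 2) - delta.

(* Main.v *)
Require Import Defs.
From Stdlib Require Import Reals.
From Coquelicot Require Import Coquelicot.
Open Scope R_scope.
From Stdlib Require Import Lra ClassicalEpsilon.

Definition gE (t : R) : R := exp (- (t ^ 2)).
Definition HE (x : R) : R := RInt gE 0 x.

Lemma gE_cont x : continuous gE x.
Proof.
apply (ex_derive_continuous gE). unfold gE. auto_derive. easy.
Qed.

Lemma HE_is_RInt a b : is_RInt gE a b (RInt gE a b).
Proof.
apply (RInt_correct (V:=R_CompleteNormedModule)). apply (ex_RInt_continuous (V:=R_CompleteNormedModule)); intros z _; apply gE_cont.
Qed.

Lemma HE_deriv x : derivable_pt_lim HE x (gE x).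
Proof.
apply is_derive_Reals. apply (is_derive_RInt gE HE 0).
  apply filter_forall; intro b. apply HE_is_RInt.
apply gE_cont.
Qed.

Lemma HE0 : HE 0 = 0.
Proof. unfold HE. apply (RInt_point (V:=R_CompleteNormedModule)). Qed.

Module MC.
From mathcomp Require Import all_boot all_order all_algebra.
From mathcomp Require Import all_classical all_reals all_analysis.
From mathcomp Require Import Rstruct Rstruct_topology.
From mathcomp Require Import ring lra.
Import Order.TTheory GRing.Theory Num.Theory.
Import numFieldNormedType.Exports.
Local Open Scope classical_set_scope.
Local Open Scope ring_scope.
Notation RR := (Real.sort RbaseSymbolsImpl_R__canonical__reals_Real).
Lemma RabsE' (x : RR) : Rabs x = `|x|. Proof. by []. Qed.
Lemma bridge_derive (f : RR -> RR) (a l : RR) :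
  derivable_pt_lim f a l -> derivable f a 1 /\ (f^`() a = l)%classic.
Proof.
move=> H.
have C : (fun h : RR => h^-1 *: ((f \o shift a) (h *: 1) - f a)) @ 0^' --> l.
  apply/cvgrPdist_lt => e e0.
  have /RltP e0' := e0.
  have [[d dpos] Hd] := H e e0'.
  rewrite /dnbhs /within /=.
  apply/nbhs_ballP; exists d => //=.
    by apply/RltP.
  move=> t Bt tn0.
  rewrite /ball /= in Bt.
  have tn0' : t <> 0%coqR by apply/eqP.
  have Bt' : (Rabs t < d)%coqR by apply/RltP; rewrite RabsE' -normrN -sub0r.
  have /RltP := Hd t tn0' Bt'.
  rewrite RabsE' distrC.
  have -> : (t%:A + a) = (a + t)%coqR by rewrite addrC /GRing.scale /= mulr1.
  by rewrite /GRing.scale /= mulrC.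
split; first by apply/cvg_ex; exists l.
by rewrite derive1E; apply/cvg_lim.
Qed.
Lemma bridge_is_derive (f : RR -> RR) (a l : RR) :
  derivable_pt_lim f a l -> is_derive a 1 f l.
Proof.
move=> /bridge_derive [H1 H2]; split => //; by rewrite -derive1E.
Qed.

Definition Rsin : RR -> RR := Rtrigo_def.sin.
Definition Rcos : RR -> RR := Rtrigo_def.cos.
#[local] Instance is_derive_Rsin (x : RR) : is_derive x 1 Rsin (Rcos x).
Proof. apply: bridge_is_derive; exact: derivable_pt_lim_sin. Qed.
#[local] Instance is_derive_Rcos (x : RR) : is_derive x 1 Rcos (- Rsin x).
Proof. apply: bridge_is_derive; exact: derivable_pt_lim_cos. Qed.

Fact cos_Rcos_aux (x : RR) :
  (sin x - Rsin x) ^+ 2 + (cos x - Rcos x) ^+ 2 = 0.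
Proof.
set v := LHS; pattern x in v; move: @v; set f := (X in let _ := X x in _) => /=.
apply: (@eq_trans _ _ (f 0)); last first.
  rewrite /f cos0 sin0 /Rsin /Rcos sin_0 cos_0.
  by rewrite !(subrr, expr0n, addr0).
apply: is_derive_0_is_cst => {}x.
apply: trigger_derive; rewrite /GRing.scale /=.
ring.
Qed.

Lemma cos_Rcos (x : RR) : cos x = Rcos x.
Proof.
have /eqP := cos_Rcos_aux x.
rewrite paddr_eq0 => [/andP[_]||]; try exact: sqr_ge0.
by rewrite sqrf_eq0 subr_eq0 => /eqP.
Qed.

Lemma pi_PI : pi = PI :> RR.
Proof.
have h1 : cos (PI / 2) = 0 by rewrite cos_Rcos /Rcos cos_PI2.
have P4 : PI <= 4 by have := PI_4; rewrite IZRposE INRE => /RleP.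
have P0 : 0 < PI by apply/RltP; exact: PI_RGT_0.
have p2 := @pi_ge2 RbaseSymbolsImpl_R__canonical__reals_Real.
have : PI / 2 = pi / 2.
  apply: cos_inj; last by rewrite h1 cos_pihalf.
    rewrite in_itv /=; apply/andP; split.
      by rewrite divr_ge0 // ltW.
    rewrite ler_pdivrMr //; lra.
  rewrite in_itv /=; apply/andP; split.
    by rewrite divr_ge0 // pi_ge0.
  rewrite ler_pdivrMr //; lra.
by move=> /(congr1 (fun z => z * 2)); rewrite !divfK // => ->.
Qed.

Import gauss_integral_proof.

Lemma gE_eq (t : RR) : gE t = gauss_fun t.
Proof. by rewrite /gE /gauss_fun RexpE RpowE. Qed.

Lemma dH (y : RR) : is_derive y 1 (HE : RR -> RR) (gauss_fun y).
Proof. apply: bridge_is_derive; rewrite -gE_eq; exact: HE_deriv. Qed.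

Lemma cH : continuous (HE : RR -> RR).
Proof.
move=> y; apply/differentiable_continuous/derivable1_diffP.
by case: (dH y).
Qed.

Lemma HE_integral (x : RR) : 0 < x -> integral0_gauss x = HE x.
Proof.
move=> x0.
have cf : {within `[0, x], continuous (@gauss_fun RR)}.
  by apply: continuous_subspaceT; exact: continuous_gauss_fun.
have dF : derivable_oo_LRcontinuous (HE : RR -> RR) 0 x.
  split.
  - by move=> y _; case: (dH y).
  - exact: cvg_at_right_filter (cH 0).
  - exact: cvg_at_left_filter (cH x).
rewrite /integral0_gauss /Rintegral (continuous_FTC2 x0 cf dF); last first.
  by move=> y _; rewrite derive1E; case: (dH y).
by rewrite HE0 -EFinB subr0.
Qed.

Notation RT := RbaseSymbolsImpl_R__canonical__reals_Real.

Lemma cvg_HE : (HE : RR -> RR) x @[x --> +oo] --> Num.sqrt pi / 2.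
Proof.
have cvg_Ig : @integral0_gauss RT x @[x --> +oo] --> Num.sqrt pi / 2.
  have : Num.sqrt (@integral0_gauss RT x ^+ 2) @[x --> +oo]
      --> Num.sqrt (pi / 4).
    apply: continuous_cvg => //;
      [exact: sqrt_continuous|exact: cvg_integral0_gauss_sqr].
  rewrite sqrtrM ?pi_ge0// sqrtrV// (_ : 4 = 2 ^+ 2); last first.
    by rewrite expr2 -natrM.
  rewrite sqrtr_sqr ger0_norm//.
  rewrite (_ : (fun _ => Num.sqrt _) = integral0_gauss)//.
  apply/funext => r; rewrite sqrtr_sqr// ger0_norm//.
  exact: integral0_gauss_ge0.
apply: cvg_trans cvg_Ig; apply: near_eq_cvg; near=> x; apply: HE_integral.
near: x; apply: nbhs_pinfty_gt; exact: real0.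
Unshelve. all: end_near. Qed.

Lemma HE_lim (eps : R) : (0 < eps)%coqR -> exists M : R, forall x : R,
  (M < x)%coqR -> (Rabs (HE x - sqrt PI / 2) < eps)%coqR.
Proof.
move=> /RltP e0.
have := cvg_HE. move=> /cvgrPdist_lt /(_ eps e0).
case=> M [_ HM]. exists M => x /RltP Mx. apply/RltP.
rewrite RabsE' distrC. have := HM x Mx. rewrite pi_PI RsqrtE.
by rewrite /Rdiv IZRposE INRE.
Qed.
End MC.


Definition phi (t : R) : R := exp (- (t ^ 2) / 2).
Definition s2 : R := sqrt 2.
Definition G (x : R) : R := s2 * HE (x / s2).
Definition sP : R := sqrt (2 * PI).
Definition L : R := sP / 2.

Lemma s2_pos : 0 < s2.
Proof. unfold s2. apply sqrt_lt_R0. lra. Qed.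

Lemma s2_sq : s2 * s2 = 2.
Proof. unfold s2. apply sqrt_sqrt. lra. Qed.

Lemma sP_pos : 0 < sP.
Proof. unfold sP. apply sqrt_lt_R0. generalize PI_RGT_0. lra. Qed.

Lemma L_eq : L = s2 * (sqrt PI / 2).
Proof. unfold L, sP, s2. rewrite sqrt_mult_alt by lra. field. Qed.

Lemma G_deriv x : is_derive G x (phi x).
Proof.
unfold G.
assert (H1 : is_derive (fun y => HE (y / s2)) x (/ s2 * gE (x / s2))).
{ apply (is_derive_comp HE (fun y => y / s2) x (gE (x / s2)) (/ s2)).
  - apply is_derive_Reals. apply HE_deriv.
  - assert (Hs := s2_pos). auto_derive. lra. field. lra. }
assert (H2 := is_derive_scal _ x s2 _ H1).
simpl in H2. replace (phi x) with (s2 * (/ s2 * gE (x / s2))). exact H2.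
assert (Hs := s2_pos). field_simplify. 2: lra.
unfold gE, phi. f_equal. 
replace ((x / s2) ^ 2) with (x ^ 2 / (s2 * s2)) by (field; lra).
rewrite s2_sq. field.
Qed.

Lemma phi_pos x : 0 < phi x.
Proof. apply exp_pos. Qed.

Lemma G_cont x : continuous G x.
Proof. apply (ex_derive_continuous (K:=R_AbsRing) (V:=R_NormedModule)). eexists. apply G_deriv. Qed.

Lemma G_lim : filterlim G (Rbar_locally p_infty) (locally L).
Proof.
apply filterlim_locally. intros eps.
assert (Hs := s2_pos).
assert (He : 0 < eps / s2) by (apply Rdiv_lt_0_compat; [apply cond_pos | lra]).
destruct (MC.HE_lim _ He) as [M HM].
exists (M * s2). intros x Hx.
change (Rabs (G x - L) < eps).
rewrite L_eq. unfold G.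
replace (s2 * HE (x / s2) - s2 * (sqrt PI / 2)) with (s2 * (HE (x / s2) - sqrt PI / 2)) by ring.
rewrite Rabs_mult, Rabs_pos_eq by lra.
assert (Hx' : M < x / s2).
{ apply (Rmult_lt_reg_r s2); auto. replace (x / s2 * s2) with x by (field; lra). exact Hx. }
specialize (HM _ Hx').
apply (Rmult_lt_compat_l s2) in HM; auto.
replace (s2 * (eps / s2)) with (pos eps) in HM by (field; lra). exact HM.
Qed.

Lemma Q_eq x : Q x = / 2 - G x / sP.
Proof.
unfold Q.
assert (HI : is_RInt_gen (fun t => exp (- (t ^ 2) / 2)) (at_point x) (Rbar_locally p_infty) (L - G x)).
{ apply (is_RInt_gen_ext (Derive G)).
  - apply filter_forall. intros [a b] y _. simpl.
    apply is_derive_unique. apply G_deriv.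
  - apply is_RInt_gen_Derive.
    + apply filter_forall. intros [a b] y _. eexists; apply G_deriv.
    + apply filter_forall. intros [a b] y _. simpl.
      apply (continuous_ext phi).
      * intros t. symmetry. apply is_derive_unique. apply G_deriv.
      * apply (ex_derive_continuous (K:=R_AbsRing) (V:=R_NormedModule)). unfold phi. auto_derive. easy.
    + intros P HP. unfold filtermap, at_point. apply locally_singleton. exact HP.
    + apply G_lim. }
rewrite (is_RInt_gen_unique _ _ HI).
fold sP. unfold L. assert (H := sP_pos). field. lra.
Qed.

Lemma G_incr x y : x < y -> G x < G y.
Proof.
intros Hxy.
destruct (MVT_gen G x y phi) as [c [Hc Heq]].
- intros t _. apply G_deriv.
- intros t _. apply continuity_pt_filterlim. apply G_cont.
- assert (H := phi_pos c). nra.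
Qed.

Lemma G_odd x : G (- x) = - G x.
Proof.
set (D := fun t => G (- t) + G t).
assert (HD : forall t, is_derive D t 0).
{ intros t. unfold D.
  replace 0 with (-1 * phi (- t) + phi t).
  - apply (is_derive_plus (fun t => G (- t)) G).
    + apply (is_derive_comp G Ropp t (phi (-t)) (-1)).
      * apply G_deriv.
      * auto_derive. easy. ring.
    + apply G_deriv.
  - unfold phi. replace ((- t) ^ 2) with (t ^ 2) by ring. ring. }
destruct (MVT_gen D 0 x (fun _ => 0)) as [c [_ Heq]].
- intros t _. apply HD.
- intros t _. apply continuity_pt_filterlim.
  apply (ex_derive_continuous (K:=R_AbsRing) (V:=R_NormedModule)). eexists. apply HD.
- assert (HD0 : D 0 = 0).
  { unfold D, G. replace (- 0) with 0 by ring. replace (0 / s2) with 0 by (unfold Rdiv; ring).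
    rewrite HE0. ring. }
  unfold D in Heq, HD0. lra.
Qed.

Lemma G_lim_eps eps : 0 < eps -> exists M, forall y, M < y -> Rabs (G y - L) < eps.
Proof.
intros He.
assert (H := proj1 (filterlim_locally (F:=Rbar_locally p_infty) G L) G_lim (mkposreal _ He)).
destruct H as [M HM]. exists M. intros y Hy. exact (HM y Hy).
Qed.

Lemma G_lt_L x : G x < L.
Proof.
destruct (Rlt_or_le (G x) L) as [H|H]; auto.
exfalso.
assert (H1 := G_incr x (x + 1) ltac:(lra)).
assert (He : 0 < G (x + 1) - L) by lra.
destruct (G_lim_eps _ He) as [M HM].
set (y := Rmax M (x + 1) + 1).
assert (Hy1 : M < y) by (unfold y; generalize (Rmax_l M (x+1)); lra).
assert (Hy2 : x + 1 < y) by (unfold y; generalize (Rmax_r M (x+1)); lra).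
specialize (HM y Hy1).
assert (H2 := G_incr _ _ Hy2).
rewrite Rabs_pos_eq in HM by lra. lra.
Qed.

Lemma G_gt_mL x : - L < G x.
Proof. assert (H := G_lt_L (- x)). rewrite G_odd in H. lra. Qed.

Lemma G_surj c : - L < c < L -> exists y, G y = c.
Proof.
intros Hc.
assert (He : 0 < Rmin (L - c) (L + c)) by (apply Rmin_glb_lt; lra).
destruct (G_lim_eps _ He) as [M HM].
set (b := Rabs M + 1).
assert (Hb : M < b) by (unfold b; generalize (Rle_abs M); lra).
assert (Hb0 : 0 < b) by (unfold b; generalize (Rabs_pos M); lra).
specialize (HM b Hb).
assert (H1 := Rmin_l (L - c) (L + c)).
assert (H2 := Rmin_r (L - c) (L + c)).
apply Rabs_def2 in HM. destruct HM as [HM1 HM2].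
assert (Hgb : c < G b) by lra.
assert (Hga : G (- b) < c) by (rewrite G_odd; lra).
destruct (IVT_gen G (- b) b c) as [y [_ Hy]].
- intros t. apply continuity_pt_filterlim. apply G_cont.
- split.
  + apply Rle_trans with (G (- b)); [apply Rmin_l | lra].
  + apply Rle_trans with (G b); [lra | apply Rmax_r].
- exists y. exact Hy.
Qed.

Lemma Q_pos x : 0 < Q x.
Proof.
rewrite Q_eq. assert (H := G_lt_L x). assert (Hs := sP_pos). unfold L in H.
apply Rlt_Rminus. apply (Rmult_lt_reg_r sP); auto.
unfold Rdiv. rewrite Rmult_assoc, Rinv_l by lra. lra.
Qed.

Lemma Q_decr x y : x < y -> Q y < Q x.
Proof.
intros H. rewrite !Q_eq. assert (H1 := G_incr _ _ H). assert (Hs := sP_pos).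
apply Rplus_lt_compat_l. apply Ropp_lt_contravar.
apply Rmult_lt_compat_r; auto. apply Rinv_0_lt_compat; auto.
Qed.

Lemma Q_le x y : x <= y -> Q y <= Q x.
Proof. intros [H|H]. left; apply Q_decr; auto. subst; lra. Qed.

Lemma Q_surj d : 0 < d < 1 -> exists x, Q x = d.
Proof.
intros Hd. assert (Hs := sP_pos).
destruct (G_surj (sP * (/ 2 - d))) as [y Hy].
{ unfold L. split; nra. }
exists y. rewrite Q_eq, Hy. field. lra.
Qed.

Lemma Qinv_spec d : 0 < d < 1 -> Q (Qinv d) = d.
Proof.
intros Hd. unfold Qinv. apply epsilon_spec. apply Q_surj; auto.
Qed.

Lemma phi_shift eps mu : 0 < mu ->
  exp eps * phi (eps / mu + mu / 2) = phi (eps / mu - mu / 2).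
Proof.
intros Hm. unfold phi. rewrite <- exp_plus. f_equal. field. lra.
Qed.

Lemma B_deriv eps delta mu : 0 < mu ->
  is_derive (Bed eps delta) mu (phi (eps / mu - mu / 2) / sP).
Proof.
intros Hm.
apply (is_derive_ext (fun m => / 2 - G (eps / m - m / 2) / sP
   - exp eps * (/ 2 - G (eps / m + m / 2) / sP) - delta)).
{ intros t. unfold Bed. rewrite !Q_eq. reflexivity. }
auto_derive.
2: { rewrite !(is_derive_unique (fun x => G x) _ _ (G_deriv _)).
     replace (eps * / mu + - (mu * / 2)) with (eps / mu - mu / 2) by (unfold Rdiv; ring).
     replace (eps * / mu + mu * / 2) with (eps / mu + mu / 2) by (unfold Rdiv; ring).
     rewrite <- (phi_shift eps mu Hm). assert (Hs := sP_pos). field. lra. }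
all: repeat split; try (eexists; apply G_deriv); lra.
Qed.

Lemma B_cont eps delta mu : 0 < mu -> continuity_pt (Bed eps delta) mu.
Proof.
intros Hm. apply continuity_pt_filterlim.
apply (ex_derive_continuous (K:=R_AbsRing) (V:=R_NormedModule)).
eexists. apply B_deriv; auto.
Qed.

Lemma B_incr eps delta m1 m2 : 0 < m1 -> m1 < m2 -> Bed eps delta m1 < Bed eps delta m2.
Proof.
intros H1 H12.
destruct (MVT_gen (Bed eps delta) m1 m2 (fun mu => phi (eps / mu - mu / 2) / sP)) as [c [Hc Heq]].
- intros t Ht. rewrite Rmin_left, Rmax_right in Ht by lra. apply B_deriv. lra.
- intros t Ht. rewrite Rmin_left, Rmax_right in Ht by lra. apply B_cont. lra.
- assert (Hp := phi_pos (eps / c - c / 2)). assert (Hs := sP_pos).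
  assert (0 < phi (eps / c - c / 2) / sP) by (apply Rdiv_lt_0_compat; auto).
  nra.
Qed.

Section Reps.
Variables (eps x : R).
Hypothesis Heps : 0 < eps.
Let q := Qinv x.
Let r := sqrt (q ^ 2 + 2 * eps).

Lemma r_sq : r * r = q ^ 2 + 2 * eps.
Proof. unfold r. apply sqrt_sqrt. nra. Qed.

Lemma r_ge0 : 0 <= r.
Proof. unfold r. apply sqrt_pos. Qed.

Lemma Reps_pos : 0 < Reps eps x.
Proof.
unfold Reps. fold q. fold r. assert (H1 := r_sq). assert (H2 := r_ge0). nra.
Qed.

Lemma Reps_a : eps / Reps eps x - Reps eps x / 2 = q.
Proof.
assert (Hp := Reps_pos). unfold Reps in *. fold q r in Hp |- *.
assert (H1 := r_sq).
replace eps with ((r - q) * (r + q) / 2) at 1 by nra.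
field. lra.
Qed.

Lemma Reps_b : eps / Reps eps x + Reps eps x / 2 = r.
Proof.
assert (Hp := Reps_pos). unfold Reps in *. fold q r in Hp |- *.
assert (H1 := r_sq).
replace eps with ((r - q) * (r + q) / 2) at 1 by nra.
field. lra.
Qed.

Lemma r_ge : sqrt (2 * eps) <= r.
Proof. unfold r. apply sqrt_le_1_alt. nra. Qed.

Lemma B_Reps delta : Bed eps delta (Reps eps x) = Q q - exp eps * Q r - delta.
Proof. unfold Bed. rewrite Reps_a, Reps_b. reflexivity. Qed.

End Reps.

Lemma Rmax_cont m1 t : continuity_pt (fun m => Rmax m m1) t.
Proof.
intros e He. exists e. split; auto. intros x [_ Hx]. simpl in *. unfold R_dist in *.
unfold Rmax. destruct (Rle_dec x m1), (Rle_dec t m1); unfold Rabs in *;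
 repeat destruct Rcase_abs; lra.
Qed.

Theorem mainTheorem3 (eps delta : R) :
  0 < eps -> 0 < delta < 1 ->
  delta + exp eps * Q (sqrt (2 * eps)) < 1 ->
  let delta' := delta + exp eps * Q (sqrt (2 * eps)) in
  (Bed eps delta (Reps eps delta) <= 0 /\ 0 <= Bed eps delta (Reps eps delta'))
  /\ (forall mu0 : R, 0 < mu0 -> Bed eps delta mu0 = 0 ->
        Reps eps delta <= mu0 <= Reps eps delta')
  /\ (exists mu0 : R, 0 < mu0 /\ Reps eps delta <= mu0 <= Reps eps delta'
        /\ Bed eps delta mu0 = 0).
Proof.
intros He Hd Hd1 delta'.
assert (Hex := exp_pos eps).
assert (HQ0 := Q_pos (sqrt (2 * eps))).
assert (Hd' : 0 < delta' < 1) by (unfold delta'; split; nra).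
set (m1 := Reps eps delta). set (m2 := Reps eps delta').
assert (Hm1 : 0 < m1) by (apply Reps_pos; auto).
assert (Hm2 : 0 < m2) by (apply Reps_pos; auto).
assert (B1 : Bed eps delta m1 < 0).
{ unfold m1. rewrite B_Reps by auto. rewrite Qinv_spec by auto.
  assert (H := Q_pos (sqrt (Qinv delta ^ 2 + 2 * eps))). nra. }
assert (B2 : 0 <= Bed eps delta m2).
{ unfold m2. rewrite B_Reps by auto. rewrite Qinv_spec by auto.
  assert (H := Q_le _ _ (r_ge eps delta')).
  set (Qr := Q (sqrt (Qinv delta' ^ 2 + 2 * eps))) in *. unfold delta'. nra. }
assert (Hm12 : m1 <= m2).
{ destruct (Rle_or_lt m1 m2) as [H|H]; auto.
  assert (H' := B_incr eps delta m2 m1 Hm2 H). lra. }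
split; [split; lra|split].
- intros mu0 Hmu0 HB. split.
  + destruct (Rle_or_lt m1 mu0) as [H|H]; auto.
    assert (H' := B_incr eps delta mu0 m1 Hmu0 H). lra.
  + destruct (Rle_or_lt mu0 m2) as [H|H]; auto.
    assert (H' := B_incr eps delta m2 mu0 Hm2 H). lra.
- set (f := fun m => Bed eps delta (Rmax m m1)).
  assert (Hf1 : f m1 = Bed eps delta m1) by (unfold f; rewrite Rmax_left; lra).
  assert (Hf2 : f m2 = Bed eps delta m2) by (unfold f; rewrite Rmax_left; lra).
  destruct (IVT_gen f m1 m2 0) as [y [Hy Hfy]].
  + intros t. unfold f.
    apply (continuity_pt_comp (fun m => Rmax m m1) (Bed eps delta)).
    * apply Rmax_cont.
    * apply B_cont. generalize (Rmax_r t m1). lra.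
  + rewrite Hf1, Hf2. split.
    * apply Rle_trans with (Bed eps delta m1); [apply Rmin_l | lra].
    * apply Rle_trans with (Bed eps delta m2); [lra | apply Rmax_r].
  + rewrite Rmin_left, Rmax_right in Hy by lra.
    exists y. split; [lra|split; [lra|]].
    unfold f in Hfy. rewrite Rmax_left in Hfy by lra. exact Hfy.
Qed.
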